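(* Let $D\subset\mathbb R^n$ be a domain, $\theta\in(-\pi,\pi]$, and let $k\in C^2([0,1]\times D)$ satisfy the degenerate special Lagrangian equation $$\mathrm{Im}\big(e^{-\sqrt{-1}\theta}\det(I_n+\sqrt{-1}\nabla^2k)\big)=0,\qquad \mathrm{Re}\big(e^{-\sqrt{-1}\theta}\det(I+\sqrt{-1}\nabla_x^2k)\big)>0$$ at every point. Let $M(t,x)=\mathrm{Re}\big(e^{-\sqrt{-1}\theta}\mathrm{cof}(I_n+\sqrt{-1}\nabla^2k(t,x))\big)$, so that the linearization of $u\mapsto\mathrm{Im}(e^{-\sqrt{-1}\theta}\det(I_n+\sqrt{-1}\nabla^2u))$ at $k$ is $\psi\mapsto\mathrm{tr}(M\nabla^2\psi)$. Then at every point $(t,x)$ with $\nabla\dot k(t,x)\ne0$, the matrix $M(t,x)$ is positive semidefinite with exactly one zero eigenvalue and its null space is spanned by $\nabla\dot k(t,x)$; at every critical point of $\dot k$ (i.e. $\nabla\dot k(t,x)=0$), $M(t,x)$ is positive semidefinite with exactly one nonzero eigenvalue.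
   Context: Coordinates on $[0,1]\times D$ are $(t,x)$; $\nabla^2$ is the full $(n+1)\times(n+1)$ Hessian in $(t,x)$ (with $t$ as the $0$-th coordinate), $\nabla^2_x$ the $n\times n$ Hessian in $x$, $\dot k=\partial_tk$, and $\nabla\dot k$ its full gradient in $(t,x)$. $I_n=\mathrm{diag}(0,1,\dots,1)\in\mathrm{Sym}(\mathbb R^{n+1})$, $I$ the $n\times n$ identity, $\mathrm{cof}$ the cofactor matrix. *)

(* Defs.v *)
Set Warnings "-notation-overridden,-ambiguous-paths,-redundant-canonical-projection".
From HB Require Import structures.
From mathcomp Require Import all_boot all_order all_algebra.
From Stdlib Require Import Reals Lra ClassicalEpsilon FunctionalExtensionality.
Set Implicit Arguments.
Unset Strict Implicit.
Unset Printing Implicit Defensive.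
Import GRing.Theory.
Local Open Scope ring_scope.

Definition Req_bool (x y : R) : bool := if Req_EM_T x y then true else false.
Lemma Req_boolP : Equality.axiom Req_bool.
Proof. move=> x y; rewrite /Req_bool; case: Req_EM_T => h; constructor => //. Qed.
HB.instance Definition _ := hasDecEq.Build R Req_boolP.

Definition R_find (P : pred R) (_ : nat) : option R :=
  match excluded_middle_informative (exists x, P x) with
  | left h => Some (proj1_sig (constructive_indefinite_description _ h))
  | right _ => None
  end.
Lemma R_find_correct P n x : R_find P n = Some x -> P x.
Proof.
rewrite /R_find; case: excluded_middle_informative => // h [<-].
exact: proj2_sig (constructive_indefinite_description _ h).
Qed.
Lemma R_find_complete (P : pred R) : (exists x, P x) -> exists n, R_find P n.
Proof. move=> h; exists 0%N; rewrite /R_find; by case: excluded_middle_informative. Qed.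
Lemma R_find_ext (P Q : pred R) : P =1 Q -> R_find P =1 R_find Q.
Proof. by move=> /functional_extensionality ->. Qed.
HB.instance Definition _ := hasChoice.Build R R_find_correct R_find_complete R_find_ext.

Lemma R_addA : associative Rplus. Proof. move=> *; ring. Qed.
Lemma R_addC : commutative Rplus. Proof. move=> *; ring. Qed.
Lemma R_add0 : left_id R0 Rplus. Proof. move=> *; ring. Qed.
Lemma R_addN : left_inverse R0 Ropp Rplus. Proof. move=> *; ring. Qed.
HB.instance Definition _ := GRing.isZmodule.Build R R_addA R_addC R_add0 R_addN.

Lemma R_mulA : associative Rmult. Proof. move=> *; ring. Qed.
Lemma R_mulC : commutative Rmult. Proof. move=> *; ring. Qed.
Lemma R_mul1 : left_id R1 Rmult. Proof. move=> *; ring. Qed.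
Lemma R_mulDl : left_distributive Rmult Rplus. Proof. move=> *; ring. Qed.
Lemma R_one_neq0 : R1 != R0.
Proof. apply/eqP; exact: R1_neq_R0. Qed.
HB.instance Definition _ :=
  GRing.Zmodule_isComNzRing.Build R R_mulA R_mulC R_mul1 R_mulDl R_one_neq0.

Definition R_inv (x : R) : R := if Req_bool x R0 then R0 else Rinv x.
Lemma R_mulVf (x : R) : x != 0 -> R_inv x * x = 1.
Proof.
move=> /eqP hx; rewrite /R_inv; case: Req_boolP => // _.
exact: Rinv_l.
Qed.
Lemma R_inv0 : R_inv 0 = 0.
Proof. by rewrite /R_inv; case: Req_boolP. Qed.
HB.instance Definition _ := GRing.ComNzRing_isField.Build R R_mulVf R_inv0.

Record C := Cx { Re : R; Im : R }.

Definition C2RR (z : C) : R * R := (Re z, Im z).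
Definition RR2C (p : R * R) : C := Cx p.1 p.2.
Lemma C2RRK : cancel C2RR RR2C. Proof. by case. Qed.
HB.instance Definition _ := Choice.copy C (can_type C2RRK).

Definition C0 : C := Cx R0 R0.
Definition C1 : C := Cx R1 R0.
Definition Cadd (z w : C) : C := Cx (Rplus (Re z) (Re w)) (Rplus (Im z) (Im w)).
Definition Copp (z : C) : C := Cx (Ropp (Re z)) (Ropp (Im z)).
Definition Cmul (z w : C) : C :=
  Cx (Rminus (Rmult (Re z) (Re w)) (Rmult (Im z) (Im w)))
     (Rplus (Rmult (Re z) (Im w)) (Rmult (Im z) (Re w))).

Lemma C_addA : associative Cadd.
Proof. by case=> a b [c d] [e f]; rewrite /Cadd /=; f_equal; ring. Qed.
Lemma C_addC : commutative Cadd.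
Proof. by case=> a b [c d]; rewrite /Cadd /=; f_equal; ring. Qed.
Lemma C_add0 : left_id C0 Cadd.
Proof. by case=> a b; rewrite /Cadd /=; f_equal; ring. Qed.
Lemma C_addN : left_inverse C0 Copp Cadd.
Proof. by case=> a b; rewrite /Cadd /C0 /=; f_equal; ring. Qed.
HB.instance Definition _ := GRing.isZmodule.Build C C_addA C_addC C_add0 C_addN.

Lemma C_mulA : associative Cmul.
Proof. by case=> a b [c d] [e f]; rewrite /Cmul /=; f_equal; ring. Qed.
Lemma C_mulC : commutative Cmul.
Proof. by case=> a b [c d]; rewrite /Cmul /=; f_equal; ring. Qed.
Lemma C_mul1 : left_id C1 Cmul.
Proof. by case=> a b; rewrite /Cmul /C1 /=; f_equal; ring. Qed.
Lemma C_mulDl : left_distributive Cmul Cadd.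
Proof. by case=> a b [c d] [e f]; rewrite /Cmul /Cadd /=; f_equal; ring. Qed.
Lemma C_one_neq0 : C1 != C0 :> C.
Proof. apply/eqP => h; case: h => h; exact: R1_neq_R0 h. Qed.
HB.instance Definition _ :=
  GRing.Zmodule_isComNzRing.Build C C_mulA C_mulC C_mul1 C_mulDl C_one_neq0.

Definition RtoC (r : R) : C := Cx r R0.
Definition iC : C := Cx R0 R1.
Definition expi (t : R) : C := Cx (cos t) (sin t).

Definition cofmx (m : nat) (A : 'M[C]_m) : 'M[C]_m := \matrix_(i, j) cofactor A i j.

(* I_n = diag(0,1,...,1) in Sym(R^{n+1}), as a complex matrix. *)
Definition In_mx (n : nat) : 'M[C]_(n.+1) :=
  \matrix_(i, j) (if (i == j) && (i != ord0) then 1 else 0).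

Definition plus_iH (m : nat) (P : 'M[C]_m) (H : 'M[R]_m) : 'M[C]_m :=
  P + map_mx (fun r => iC * RtoC r) H.

Definition xblock (n : nat) (H : 'M[R]_(n.+1)) : 'M[R]_n :=
  \matrix_(i, j) H (lift ord0 i) (lift ord0 j).

Definition linM (n : nat) (theta : R) (H : 'M[R]_(n.+1)) : 'M[R]_(n.+1) :=
  \matrix_(i, j) Re (expi (Ropp theta) * cofmx (plus_iH (In_mx n) H) i j).

Definition psd (m : nat) (M : 'M[R]_m) : Prop :=
  forall w : 'cV[R]_m, Rle R0 ((w^T *m M *m w) ord0 ord0).

(* Analysis on [0,1] x D, points z : 'I_(n+1) -> R with z 0 = t       *)

Definition pt (m : nat) := 'I_m -> R.

Definition Rball (m : nat) (x : pt m) (r : R) (y : pt m) : Prop :=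
  forall i, Rlt (Rabs (Rminus (y i) (x i))) r.

Definition is_open (m : nat) (U : pt m -> Prop) : Prop :=
  forall x, U x -> exists r, Rlt R0 r /\ forall y, Rball x r y -> U y.

Definition is_connected (m : nat) (D : pt m -> Prop) : Prop :=
  forall U V : pt m -> Prop, is_open U -> is_open V ->
    (forall x, D x -> U x \/ V x) ->
    (exists x, D x /\ U x) -> (exists x, D x /\ V x) ->
    exists x, D x /\ U x /\ V x.

Definition is_domain (m : nat) (D : pt m -> Prop) : Prop :=
  (exists x, D x) /\ is_open D /\ is_connected D.

Definition Omega (n : nat) (D : pt n -> Prop) (z : pt n.+1) : Prop :=
  Rle R0 (z ord0) /\ Rle (z ord0) R1 /\ D (fun i => z (lift ord0 i)).

Definition upd (m : nat) (z : pt m) (i : 'I_m) (h : R) : pt m :=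
  fun j => if j == i then Rplus (z j) h else z j.

(* l is the partial derivative of f in direction i at z, within the set S
   (one-sided at boundary points of S) *)
Definition is_partial (m : nat) (S : pt m -> Prop) (f : pt m -> R) (i : 'I_m)
    (z : pt m) (l : R) : Prop :=
  forall eps, Rlt R0 eps -> exists delta, Rlt R0 delta /\
    forall h, h <> R0 -> Rlt (Rabs h) delta -> S (upd z i h) ->
      Rlt (Rabs (Rminus (Rdiv (Rminus (f (upd z i h)) (f z)) h) l)) eps.

Definition cont_on (m : nat) (S : pt m -> Prop) (f : pt m -> R) : Prop :=
  forall z, S z -> forall eps, Rlt R0 eps -> exists delta, Rlt R0 delta /\
    forall w, S w -> Rball z delta w -> Rlt (Rabs (Rminus (f w) (f z))) eps.

(* k is C^2 on S, with first partials Dk i = d_i k and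
   second partials D2k i j = d_i (d_j k), all continuous on S *)
Definition C2_on (m : nat) (S : pt m -> Prop) (k : pt m -> R)
    (Dk : 'I_m -> pt m -> R) (D2k : 'I_m -> 'I_m -> pt m -> R) : Prop :=
  cont_on S k /\
  (forall i, cont_on S (Dk i)) /\
  (forall i j, cont_on S (D2k i j)) /\
  (forall i z, S z -> is_partial S k i z (Dk i z)) /\
  (forall i j z, S z -> is_partial S (Dk j) i z (D2k i j z)).

Definition hess (m : nat) (D2k : 'I_m -> 'I_m -> pt m -> R) (z : pt m) : 'M[R]_m :=
  \matrix_(i, j) D2k i j z.

(* the full gradient of kdot = d_t k = Dk 0:  (d_j (d_0 k))_j *)
Definition grad_kdot (n : nat) (D2k : 'I_n.+1 -> 'I_n.+1 -> pt n.+1 -> R)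
    (z : pt n.+1) : 'cV[R]_(n.+1) :=
  \col_j D2k j ord0 z.

(* Main.v *)
Require Import Defs.
Set Warnings "-notation-overridden,-ambiguous-paths,-redundant-canonical-projection".
From HB Require Import structures.
From mathcomp Require Import all_boot all_order all_algebra.
From Stdlib Require Import Reals Lra Psatz FunctionalExtensionality Classical.
Set Implicit Arguments.
Unset Strict Implicit.
Unset Printing Implicit Defensive.
Import GRing.Theory.
Local Open Scope ring_scope.


Section Analysis.
Local Open Scope R_scope.

Lemma upd_same m (w : pt m) i s h : upd (upd w i s) i h = upd w i (s + h).
Proof.
apply: functional_extensionality => l; rewrite /upd; case: (l == i) => //=; ring.
Qed.

Lemma upd_comm m (w : pt m) i j s u : i != j ->
  upd (upd w i s) j u = upd (upd w j u) i s.
Proof.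
move=> ij; apply: functional_extensionality => l; rewrite /upd.
have [->|lj] := eqVneq l j.
  have ji : (j == i) = false by apply/negbTE; rewrite eq_sym.
  by rewrite ji.
by [].

Qed.

Lemma upd0 m (w : pt m) i : upd w i 0 = w.
Proof.
apply: functional_extensionality => l; rewrite /upd; case: (l == i) => //=; ring.
Qed.

Lemma ball_P m (z : pt m) i j r s u : i != j -> Rabs s < r -> Rabs u < r -> 0 < r ->
  Rball z r (upd (upd z i s) j u).
Proof.
move=> ij hs hu hr l; rewrite /upd.
have [->|lj] := eqVneq l j.
  have ji : (j == i) = false by apply/negbTE; rewrite eq_sym.
  rewrite ji.
  by have -> : z j + u - z j = u by ring.
case: (l == i) => /=.
  by have -> : z l + s - z l = s by ring.
have -> : z l - z l = 0 by ring.
by rewrite Rabs_R0.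
Qed.

Lemma deriv_line m (S : pt m -> Prop) (f : pt m -> R) i (w : pt m) s l rho :
  0 < rho -> (forall h, Rabs h < rho -> S (upd w i (s + h))) ->
  is_partial S f i (upd w i s) l ->
  derivable_pt_lim (fun s' => f (upd w i s')) s l.
Proof.
move=> hr hS hp eps heps.
have [d [hd H]] := hp eps heps.
have hm : 0 < Rmin d rho by apply: Rmin_pos.
exists (mkposreal _ hm) => h hne hlt /=.
have h1 : Rabs h < d by apply: Rlt_le_trans hlt (Rmin_l _ _).
have h2 : Rabs h < rho by apply: Rlt_le_trans hlt (Rmin_r _ _).
have := H h hne h1; rewrite upd_same; apply.
exact: hS.
Qed.


Lemma delta_mvt m (S : pt m -> Prop) k Dk D2k (HC : C2_on S k Dk D2k) (z : pt m) r (i j : 'I_m) t :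
  0 < r -> (forall y, Rball z r y -> S y) -> i != j -> 0 < t -> t < r / 2 ->
  exists c d, ((0 < c /\ c < t) /\ (0 < d /\ d < t)) /\
    k (upd (upd z i t) j t) - k (upd (upd z i t) j 0) - k (upd (upd z i 0) j t)
      + k (upd (upd z i 0) j 0) = D2k j i (upd (upd z i c) j d) * (t * t).
Proof.
move=> hr hB ij ht htr.
case: HC => _ [_ [_ [Hk HD]]].
have inS : forall s u, Rabs s < r -> Rabs u < r -> S (upd (upd z i s) j u).
  by move=> s u hs hu; apply: hB; apply: ball_P.
have absb : forall x, 0 <= x /\ x <= t -> forall h, Rabs h < r / 2 -> Rabs (x + h) < r.
  move=> x hx h hh; apply: Rle_lt_trans (Rabs_triang _ _) _.
  rewrite Rabs_right; lra.
have abs0 : forall x, 0 <= x /\ x <= t -> Rabs x < r.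
  move=> x hx; rewrite Rabs_right; lra.
have dk : forall u c, 0 <= u /\ u <= t -> 0 <= c /\ c <= t ->
    derivable_pt_lim (fun s => k (upd (upd z i s) j u)) c (Dk i (upd (upd z i c) j u)).
  move=> u c hu hc.
  have E : (fun s => k (upd (upd z i s) j u)) = (fun s => k (upd (upd z j u) i s)).
    by apply: functional_extensionality => s; rewrite upd_comm.
  rewrite E.
  have hr2 : 0 < r / 2 by lra.
  apply: (deriv_line (S := S) (rho := r / 2) hr2).
    move=> h hh; rewrite -(@upd_comm _ z i j (c + h) u ij); apply: inS; [exact: (absb c hc h hh) | exact: (abs0 u hu)].
  rewrite -(@upd_comm _ z i j c u ij); apply: Hk; apply: inS; [exact: (abs0 c hc) | exact: (abs0 u hu)].
pose phi := fun s => k (upd (upd z i s) j t) - k (upd (upd z i s) j 0).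
have [c [ec hc]] : exists c, phi t - phi 0 =
    (Dk i (upd (upd z i c) j t) - Dk i (upd (upd z i c) j 0)) * (t - 0) /\ (0 < c /\ c < t).
  apply: (MVT_cor2 phi (fun c => Dk i (upd (upd z i c) j t) - Dk i (upd (upd z i c) j 0))).
    exact: ht.
  move=> c hc; apply: derivable_pt_lim_minus; apply: dk => //; lra.
have [d [ed hd]] : exists d,
    Dk i (upd (upd z i c) j t) - Dk i (upd (upd z i c) j 0) =
    D2k j i (upd (upd z i c) j d) * (t - 0) /\ (0 < d /\ d < t).
  apply: (MVT_cor2 (fun u => Dk i (upd (upd z i c) j u)) (fun u => D2k j i (upd (upd z i c) j u))).
    exact: ht.
  move=> u hu.
  have hr2 : 0 < r / 2 by lra.
  apply: (deriv_line (S := S) (rho := r / 2) hr2).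
    move=> h hh; apply: inS; [apply: abs0; lra | exact: absb].
  apply: HD; apply: inS; apply: abs0; lra.
exists c, d; split; first by split.
rewrite /phi in ec; rewrite ed in ec.
lra.
Qed.


Lemma eq_of_close (a b : R) : (forall eps, 0 < eps -> Rabs (a - b) < 2 * eps) -> a = b.
Proof.
move=> h; apply: NNPP => ne.
have hp : 0 < Rabs (a - b) / 2.
  have : 0 < Rabs (a - b) by apply: Rabs_pos_lt; lra.
  lra.
have := h _ hp; lra.
Qed.

Lemma Rball_refl m (z : pt m) r : 0 < r -> Rball z r z.
Proof. by move=> hr l; rewrite Rminus_diag Rabs_R0. Qed.

Lemma clairaut_int m S k Dk D2k (HC : C2_on S k Dk D2k) (z : pt m) r (i j : 'I_m) :
  0 < r -> (forall y, Rball z r y -> S y) -> D2k i j z = D2k j i z.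
Proof.
move=> hr hB.
have [->|ij] := eqVneq i j; first by [].
have Sz : S z by apply: hB; exact: Rball_refl.
have ji : j != i by rewrite eq_sym.
apply: eq_of_close => eps heps.
have HC' := HC; case: HC' => _ [_ [Hc _]].
have [d1 [hd1 C1]] := Hc i j z Sz eps heps.
have [d2 [hd2 C2]] := Hc j i z Sz eps heps.
pose t := Rmin (Rmin d1 d2) (r / 2) / 2.
have tm1 : Rmin (Rmin d1 d2) (r / 2) <= d1.
  apply: Rle_trans (Rmin_l _ _) (Rmin_l _ _).
have tm2 : Rmin (Rmin d1 d2) (r / 2) <= d2.
  apply: Rle_trans (Rmin_l _ _) (Rmin_r _ _).
have tm3 : Rmin (Rmin d1 d2) (r / 2) <= r / 2 by apply: Rmin_r.
have tp : 0 < Rmin (Rmin d1 d2) (r / 2).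
  apply: Rmin_pos; [apply: Rmin_pos => // | lra].
have ht : 0 < t by rewrite /t; lra.
have htr : t < r / 2 by rewrite /t; lra.
have [c [d [[hc hd] e1]]] := delta_mvt HC hr hB ij ht htr.
have [c' [d' [[hc' hd'] e2]]] := delta_mvt HC hr hB ji ht htr.
rewrite !(@upd_comm _ z j i) // in e2.
have ab : forall x, 0 < x /\ x < t -> Rabs x < t.
  by move=> x hx; rewrite Rabs_right; lra.
have E : D2k j i (upd (upd z i c) j d) = D2k i j (upd (upd z i d') j c').
  have htt : t * t <> 0 by apply: Rmult_integral_contrapositive; lra.
  apply: (Rmult_eq_reg_r (t * t)) => //; rewrite -e1 -e2; ring.
have B1 : Rabs (D2k j i (upd (upd z i c) j d) - D2k j i z) < eps.
  apply: C2; first by apply: hB; apply: ball_P => //; [apply: Rlt_trans (ab c hc) _ | apply: Rlt_trans (ab d hd) _]; lra.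
  apply: ball_P => //; [apply: Rlt_le_trans (ab c hc) _ | apply: Rlt_le_trans (ab d hd) _]; rewrite /t; lra.
have B2 : Rabs (D2k i j (upd (upd z i d') j c') - D2k i j z) < eps.
  apply: C1; first by apply: hB; apply: ball_P => //; [apply: Rlt_trans (ab d' hd') _ | apply: Rlt_trans (ab c' hc') _]; lra.
  apply: ball_P => //; [apply: Rlt_le_trans (ab d' hd') _ | apply: Rlt_le_trans (ab c' hc') _]; rewrite /t; lra.
rewrite E in B1.
have := Rabs_triang (D2k i j z - D2k i j (upd (upd z i d') j c'))
                    (D2k i j (upd (upd z i d') j c') - D2k j i z).
rewrite Rabs_minus_sym in B2.
have -> : D2k i j z - D2k i j (upd (upd z i d') j c') +
          (D2k i j (upd (upd z i d') j c') - D2k j i z) = D2k i j z - D2k j i z by ring.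
lra.
Qed.

Lemma hess_sym n (D : pt n -> Prop) k Dk D2k : is_domain D -> C2_on (Omega D) k Dk D2k ->
  forall z, Omega D z -> forall i j, D2k i j z = D2k j i z.
Proof.
move=> [_ [Dop _]] HC z Oz i j.
apply: eq_of_close => eps heps.
have HC' := HC; case: HC' => _ [_ [Hc _]].
have [d1 [hd1 C1]] := Hc i j z Oz eps heps.
have [d2 [hd2 C2]] := Hc j i z Oz eps heps.
case: Oz => t0 [t1 Dx].
have [rD [hrD BD]] := Dop _ Dx.
pose eta := Rmin (Rmin d1 d2) (1 / 2) / 2.
have tp : 0 < Rmin (Rmin d1 d2) (1 / 2).
  apply: Rmin_pos; [apply: Rmin_pos => // | lra].
have tm1 : Rmin (Rmin d1 d2) (1 / 2) <= d1.
  apply: Rle_trans (Rmin_l _ _) (Rmin_l _ _).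
have tm2 : Rmin (Rmin d1 d2) (1 / 2) <= d2.
  apply: Rle_trans (Rmin_l _ _) (Rmin_r _ _).
have tm3 : Rmin (Rmin d1 d2) (1 / 2) <= 1 / 2 by apply: Rmin_r.
have he : 0 < eta by rewrite /eta; lra.
have he2 : eta <= 1 / 4 by rewrite /eta; lra.
pose h := if Rle_dec (z ord0) (1 / 2) then eta else - eta.
have hh : (0 < z ord0 + h /\ z ord0 + h < 1) /\ Rabs h < Rmin d1 d2.
  have em : eta < Rmin d1 d2.
    rewrite /eta; have := Rmin_l (Rmin d1 d2) (1 / 2); lra.
  rewrite /h; case: Rle_dec => ht /=.
    split; first by split; lra.
    rewrite Rabs_right; lra.
  split; first by split; lra.
  rewrite Rabs_left; lra.
case: hh => [[h0 h1] hd].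
pose z' := upd z ord0 h.
have z'0 : z' ord0 = z ord0 + h by rewrite /z' /upd eqxx.
have z'l : forall l : 'I_n, z' (lift ord0 l) = z (lift ord0 l).
  move=> l; rewrite /z' /upd.
  have -> : (lift ord0 l == ord0) = false by apply/negbTE; rewrite eq_sym neq_lift.
  by [].
pose r' := Rmin rD (Rmin (z ord0 + h) (1 - (z ord0 + h))).
have hr' : 0 < r'.
  apply: Rmin_pos => //; apply: Rmin_pos; lra.
have r'1 : r' <= rD by apply: Rmin_l.
have r'2 : r' <= z ord0 + h.
  apply: Rle_trans (Rmin_r _ _) (Rmin_l _ _).
have r'3 : r' <= 1 - (z ord0 + h).
  apply: Rle_trans (Rmin_r _ _) (Rmin_r _ _).
have Bz' : forall y, Rball z' r' y -> Omega D y.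
  move=> y hy; split; [|split].
  - have := hy ord0; rewrite z'0 => /Rabs_def2 [a b]; lra.
  - have := hy ord0; rewrite z'0 => /Rabs_def2 [a b]; lra.
  - apply: BD => l; have := hy (lift ord0 l); rewrite z'l => hl; lra.
have E := clairaut_int HC i j hr' Bz'.
have Oz' : Omega D z' by apply: Bz'; exact: Rball_refl.
have Bzz : forall d, Rabs h < d -> Rball z d z'.
  move=> d hdd l; rewrite /z' /upd; case: (l == ord0) => /=.
    by have -> : z l + h - z l = h by ring.
  have -> : z l - z l = 0 by ring.
  rewrite Rabs_R0; have := Rabs_pos h; lra.
have B1 : Rabs (D2k i j z' - D2k i j z) < eps.
  apply: C1 => //; apply: Bzz; have := Rmin_l d1 d2; lra.
have B2 : Rabs (D2k j i z' - D2k j i z) < eps.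
  apply: C2 => //; apply: Bzz; have := Rmin_r d1 d2; lra.
rewrite E in B1.
rewrite Rabs_minus_sym in B1.
have := Rabs_triang (D2k i j z - D2k j i z') (D2k j i z' - D2k j i z).
have -> : D2k i j z - D2k j i z' + (D2k j i z' - D2k j i z) = D2k i j z - D2k j i z by ring.
lra.
Qed.

End Analysis.


Notation CC := Defs.C.

Lemma C_eta (z : CC) : z = Cx (Re z) (Im z). Proof. by case: z. Qed.
Lemma ReD (x y : CC) : Re (x + y) = Re x + Re y. Proof. by []. Qed.
Lemma ImD (x y : CC) : Im (x + y) = Im x + Im y. Proof. by []. Qed.
Lemma Re0 : Re (0 : CC) = 0. Proof. by []. Qed.
Lemma Im0 : Im (0 : CC) = 0. Proof. by []. Qed.
Lemma ReM (x y : CC) : Re (x * y) = Re x * Re y - Im x * Im y. Proof. by []. Qed.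
Lemma ImM (x y : CC) : Im (x * y) = Re x * Im y + Im x * Re y. Proof. by []. Qed.
Lemma Re_sum (I : finType) (F : I -> CC) : Re (\sum_i F i) = \sum_i Re (F i).
Proof. exact: (big_morph Re ReD Re0). Qed.
Lemma Im_sum (I : finType) (F : I -> CC) : Im (\sum_i F i) = \sum_i Im (F i).
Proof. exact: (big_morph Im ImD Im0). Qed.

Lemma Re_mulmx m n p (A : 'M[CC]_(m,n)) (B : 'M[CC]_(n,p)) :
  map_mx Re (A *m B) = map_mx Re A *m map_mx Re B - map_mx Im A *m map_mx Im B.
Proof.
apply/matrixP=> i j; rewrite !mxE Re_sum -sumrB; apply: eq_bigr => l _.
by rewrite !mxE ReM.
Qed.
Lemma Im_mulmx m n p (A : 'M[CC]_(m,n)) (B : 'M[CC]_(n,p)) :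
  map_mx Im (A *m B) = map_mx Re A *m map_mx Im B + map_mx Im A *m map_mx Re B.
Proof.
apply/matrixP=> i j; rewrite !mxE Im_sum -big_split; apply: eq_bigr => l _.
by rewrite !mxE ImM.
Qed.

Definition Ir n : 'M[R]_(n.+1) := diag_mx (\row_(i < n.+1) (if i != ord0 then 1 else 0)).

Lemma Re_N n H : map_mx Re (plus_iH (In_mx n) H) = Ir n.
Proof.
apply/matrixP=> i j; rewrite /plus_iH /Ir !mxE.
have [->|ne] := eqVneq i j; rewrite ?eqxx /=; case: (j != ord0) => /=;
  rewrite ?mulr0n ?mulr1n /=; cbn; ring.
Qed.
Lemma Im_N n H : map_mx Im (plus_iH (In_mx n) H) = H.
Proof.
apply/matrixP=> i j; rewrite /plus_iH !mxE.
case: (i == j) => /=; case: (i != ord0) => /=; cbn; ring.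
Qed.


Lemma N_sym n (H : 'M[R]_(n.+1)) : H^T = H ->
  (plus_iH (In_mx n) H)^T = plus_iH (In_mx n) H.
Proof.
move=> Hs; apply/matrixP=> i j; rewrite /plus_iH !mxE.
have -> : H j i = H i j by rewrite -{1}Hs mxE.
by have [->|ne] := eqVneq i j; rewrite ?eqxx //= eq_sym (negPf ne).
Qed.

Lemma cof_sym n (A : 'M[CC]_n) : A^T = A -> forall i j, cofactor A i j = cofactor A j i.
Proof. by move=> As i j; rewrite -cofactor_tr As. Qed.

Lemma ReMR (x a : CC) (r : R) : Re (x * (a * RtoC r)) = Re (x * a) * r.
Proof. case: x => ? ?; case: a => ? ? /=; cbn; ring. Qed.

Lemma core_eqs n (H : 'M[R]_(n.+1)) theta (w : 'cV[R]_(n.+1)) :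
  H^T = H ->
  Im (expi (Ropp theta) * \det (plus_iH (In_mx n) H)) = R0 ->
  let N := plus_iH (In_mx n) H in
  let lam := Re (expi (Ropp theta) * \det N) in
  let y := expi (Ropp theta) *: (\adj N *m map_mx RtoC w) in
  let p := map_mx Re y in let q := map_mx Im y in
  [/\ p = linM theta H *m w,
      lam *: w = Ir n *m p - H *m q &
      0 = Ir n *m q + H *m p ].
Proof.
move=> Hs hIm N lam y p q.
have Ns := N_sym Hs; rewrite -/N in Ns.
have Ny : N *m y = RtoC lam *: map_mx RtoC w.
  rewrite /y -scalemxAr mulmxA mul_mx_adj mul_scalar_mx scalerA.
  congr (_ *: _); rewrite /lam (C_eta (_ * _)) /RtoC; congr Cx; exact: hIm.
split.
- apply/matrixP=> i j; rewrite !mxE big_distrr Re_sum; apply: eq_bigr => l _.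
  by rewrite !mxE cof_sym // ReMR.
- have := congr1 (map_mx Re) Ny; rewrite Re_mulmx Re_N Im_N -/p -/q => ->.
  apply/matrixP=> i j; rewrite !mxE /=; cbn; ring.
- have := congr1 (map_mx Im) Ny; rewrite Im_mulmx Re_N Im_N -/p -/q => ->.
  apply/matrixP=> i j; rewrite !mxE /=; cbn; ring.
Qed.


Lemma tr11 (A : 'M[R]_1) : A^T = A.
Proof. by rewrite [A]mx11_scalar tr_scalar_mx. Qed.

Lemma quad_ident n (H : 'M[R]_(n.+1)) (lam : R) (w p q : 'cV[R]_(n.+1)) :
  H^T = H -> lam *: w = Ir n *m p - H *m q -> 0 = Ir n *m q + H *m p ->
  lam * (w^T *m p) 0 0 = (p^T *m Ir n *m p) 0 0 + (q^T *m Ir n *m q) 0 0.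
Proof.
move=> Hs E1 E2.
have Hp : H *m p = - (Ir n *m q).
  by move/eqP: E2; rewrite eq_sym addrC addr_eq0 => /eqP.
have Irs : (Ir n)^T = Ir n by rewrite /Ir tr_diag_mx.
have -> : lam * (w^T *m p) 0 0 = ((lam *: w)^T *m p) 0 0.
  by rewrite linearZ /= -scalemxAl [RHS]mxE.
rewrite E1 linearB /= !trmx_mul Irs Hs mulmxBl -!mulmxA Hp mulmxN opprK.
by rewrite !mulmxA mxE.
Qed.

Lemma quad_Ir n (x : 'cV[R]_(n.+1)) :
  (x^T *m Ir n *m x) 0 0 = \sum_(i < n) (x (lift ord0 i) 0) ^+ 2.
Proof.
rewrite -mulmxA /Ir mul_diag_mx !mxE big_ord_recl !mxE eqxx /= mul0r mulr0 add0r.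
apply: eq_bigr => i _; rewrite !mxE /=.
by rewrite mul1r expr2.
Qed.

Lemma sumsq_ge0P n (P : pred 'I_n) (f : 'I_n -> R) : Rle R0 (\sum_(i | P i) f i ^+ 2).
Proof.
apply: (big_ind (fun r => Rle R0 r)).
- by apply: Rle_refl.
- by move=> a b ha hb; apply: Rplus_le_le_0_compat.
- move=> i _; rewrite expr2; cbn; exact: Rle_0_sqr.
Qed.

Lemma sumsq_ge0 n (f : 'I_n -> R) : Rle R0 (\sum_i f i ^+ 2).
Proof. exact: sumsq_ge0P. Qed.

Lemma sumsq_eq0 n (f : 'I_n -> R) : \sum_i f i ^+ 2 = R0 -> forall i, f i = R0.
Proof.
move=> h i; move: h; rewrite (bigD1 i) //=.
have := sumsq_ge0P (fun j => j != i) f.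
move: (\sum_(j | _) _) => s hs; rewrite expr2; cbn => h.
nra.
Qed.


Lemma lift0_neq n (i : 'I_n) : (lift ord0 i != ord0 :> 'I_n.+1).
Proof. by rewrite eq_sym neq_lift. Qed.

Lemma cof00 n (H : 'M[R]_(n.+1)) :
  cofactor (plus_iH (In_mx n) H) ord0 ord0 = \det (plus_iH 1%:M (xblock H)).
Proof.
rewrite /cofactor /= expr0 mul1r; congr (\det _).
apply/matrixP=> i j; rewrite /plus_iH /xblock !mxE (inj_eq lift_inj) lift0_neq andbT.
by case: (i == j).
Qed.

Lemma M00 n (H : 'M[R]_(n.+1)) theta :
  linM theta H ord0 ord0 = Re (expi (Ropp theta) * \det (plus_iH 1%:M (xblock H))).
Proof. by rewrite /linM mxE /cofmx mxE cof00. Qed.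

Lemma M_sym n (H : 'M[R]_(n.+1)) theta : H^T = H -> (linM theta H)^T = linM theta H.
Proof.
move=> Hs; apply/matrixP=> i j; rewrite /linM /cofmx !mxE.
by rewrite cof_sym // N_sym.
Qed.

Lemma zero_tail n (H : 'M[R]_(n.+1)) (x : 'cV[R]_(n.+1)) :
  (forall i, x (lift ord0 i) 0 = 0) ->
  Ir n *m x = 0 /\ H *m x = x 0 0 *: \col_j H j ord0.
Proof.
move=> hx; split; apply/matrixP=> i j; rewrite ?ord1.
- rewrite /Ir mul_diag_mx !mxE.
  by case: (unliftP ord0 i) => [i'|] -> /=; rewrite ?hx ?mulr0 ?eqxx ?mul0r.
- rewrite !mxE big_ord_recl big1 ?addr0; first by rewrite mulrC.
  by move=> l _; rewrite hx mulr0.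
Qed.

Lemma delta00_quad n (A : 'M[R]_(n.+1)) :
  (((delta_mx ord0 0 : 'cV[R]_(n.+1))^T *m A *m (delta_mx ord0 0 : 'cV[R]_(n.+1))) 0 0)
   = A ord0 ord0.
Proof.
by rewrite trmx_delta -rowE -colE !mxE.
Qed.


Lemma scal0 (e d X dl : CC) : Im (e * d) = R0 -> Im dl = R0 -> iC * X = d * dl ->
  Re (e * X) = R0.
Proof.
case: e => a b; case: d => c d; case: X => x1 x2; case: dl => r s /=.
move=> h1 h2 h3; cbn in h1, h2, h3; case: h3 => h3 h4; subst s.
have e1 : x1 = Rmult d r by nra.
have e2 : x2 = Ropp (Rmult c r) by nra.
subst; cbn.
transitivity (Rmult r (Rplus (Rmult a d) (Rmult b c))); [ring | rewrite h1; ring].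
Qed.

Lemma Im_natb (b : bool) : Im (b%:R : CC) = R0.
Proof. by case: b. Qed.

Lemma Mv0 n (H : 'M[R]_(n.+1)) theta : H^T = H ->
  Im (expi (Ropp theta) * \det (plus_iH (In_mx n) H)) = R0 ->
  linM theta H *m (\col_j H j ord0) = 0.
Proof.
move=> Hs hIm.
set N := plus_iH (In_mx n) H; set v := \col_j H j ord0; set vC := map_mx RtoC v.
have NE : N *m delta_mx ord0 0 = iC *: vC.
  rewrite -colE; apply/matrixP=> i j; rewrite !mxE.
  by rewrite andbN add0r.
have A1 : iC *: (\adj N *m vC) = \det N *: delta_mx ord0 0.
  by rewrite scalemxAr -NE mulmxA mul_adj_mx mul_scalar_mx.
apply/matrixP=> i j; rewrite [in LHS]mxE [in RHS]mxE.
transitivity (Re (expi (Ropp theta) * (\adj N *m vC) i j)).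
  rewrite [in RHS]mxE big_distrr Re_sum; apply: eq_bigr => l _.
  rewrite /linM /cofmx !mxE -/N cof_sym ?N_sym // ReMR; congr (_ * _).
apply: (@scal0 _ (\det N) _ (delta_mx ord0 0 i j)) => //.
  by rewrite mxE Im_natb.
by have := congr1 (fun A : 'cV[CC]_(n.+1) => A i j) A1; rewrite !mxE.
Qed.


Lemma Skernel n (H : 'M[R]_(n.+1)) (lam : R) (w p q : 'cV[R]_(n.+1)) :
  lam *: w = Ir n *m p - H *m q -> 0 = Ir n *m q + H *m p ->
  \col_j H j ord0 != 0 ->
  (p^T *m Ir n *m p) 0 0 + (q^T *m Ir n *m q) 0 0 = R0 ->
  p = 0 /\ lam *: w = - (q 0 0) *: \col_j H j ord0.
Proof.
move=> E1 E2 v0 h.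
have hp := sumsq_ge0 (fun i => p (lift ord0 i) 0).
have hq := sumsq_ge0 (fun i => q (lift ord0 i) 0).
rewrite !quad_Ir in h.
move: h hp hq; set P := \sum_i _; set Q := \sum_i _ => h hp hq.
have h' : Rplus P Q = R0 by exact: h.
have P0 : P = R0 by lra.
have Q0 : Q = R0 by lra.
have tp := sumsq_eq0 P0; have tq := sumsq_eq0 Q0.
have [Ip Hp] := zero_tail H tp; have [Iq Hq] := zero_tail H tq.
have p00 : p 0 0 = 0.
  move: E2; rewrite Iq Hp add0r => /esym/eqP; rewrite scalemx_eq0 (negPf v0) orbF.
  by move/eqP.
split.
  apply/matrixP=> i j; rewrite ord1 mxE.
  by case: (unliftP ord0 i) => [i'|] ->; [exact: tp | exact: p00].
by rewrite E1 Ip Hq sub0r scaleNr.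
Qed.

Lemma case1 n (H : 'M[R]_(n.+1)) theta : H^T = H ->
  Im (expi (Ropp theta) * \det (plus_iH (In_mx n) H)) = R0 ->
  Rlt R0 (Re (expi (Ropp theta) * \det (plus_iH 1%:M (xblock H)))) ->
  \col_j H j ord0 != 0 ->
  psd (linM theta H) /\
  (forall w : 'cV[R]_(n.+1), linM theta H *m w = 0 <-> exists c : R, w = c *: \col_j H j ord0).
Proof.
move=> Hs hIm hRe v0.
set M := linM theta H; set v := \col_j H j ord0.
set lam := Re (expi (Ropp theta) * \det (plus_iH (In_mx n) H)).
have F : forall w : 'cV[R]_(n.+1), exists p q : 'cV[R]_(n.+1),
   [/\ p = M *m w, lam *: w = Ir n *m p - H *m q, 0 = Ir n *m q + H *m p &
      lam * (w^T *m M *m w) 0 0 = (p^T *m Ir n *m p) 0 0 + (q^T *m Ir n *m q) 0 0].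
  move=> w; have [e1 e2 e3] := core_eqs w Hs hIm.
  set p := map_mx Re _ in e1 e2 e3; set q := map_mx Im _ in e2 e3.
  exists p, q; split => //.
  rewrite -mulmxA /M -e1; exact: (quad_ident Hs e2 e3).
have Sge0 : forall p q : 'cV[R]_(n.+1),
    Rle R0 ((p^T *m Ir n *m p) 0 0 + (q^T *m Ir n *m q) 0 0).
  move=> p q; rewrite !quad_Ir; apply: Rplus_le_le_0_compat; exact: sumsq_ge0.
clearbody lam.
have c1 := hRe; rewrite -M00 -/M in c1.
have lam_pos : Rlt R0 lam.
  have [p [q [e1 e2 e3 e4]]] := F (delta_mx ord0 0).
  rewrite delta00_quad in e4.
  have hS : Rle R0 (lam * M ord0 ord0) := eq_ind_r (fun x => Rle R0 x) (Sge0 p q) e4.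
  case: (Rle_or_lt lam R0) => hl //.
  have S0 : (p^T *m Ir n *m p) 0 0 + (q^T *m Ir n *m q) 0 0 = R0.
    rewrite -e4; move: hS hl c1; move: (M ord0 ord0) => m hS hl c1.
    apply: Rle_antisym; last by [].
    cbn; nra.
  have [p0 _] := Skernel e2 e3 v0 S0.
  have : M ord0 ord0 = R0.
    by rewrite -delta00_quad -mulmxA -e1 p0 mulmx0 mxE.
  move=> h; rewrite h in c1; lra.
split.
  move=> w; have [p [q [e1 e2 e3 e4]]] := F w.
  have hS : Rle R0 (lam * (w^T *m M *m w) 0 0) :=
    eq_ind_r (fun x => Rle R0 x) (Sge0 p q) e4.
  move: hS; move: (_ 0 0) => x hS.
  apply: (Rmult_le_reg_l lam); [exact: lam_pos | by rewrite Rmult_0_r].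
move=> w; split.
  move=> Mw; have [p [q [e1 e2 e3 e4]]] := F w.
  have S0 : (p^T *m Ir n *m p) 0 0 + (q^T *m Ir n *m q) 0 0 = R0.
    by rewrite -e4 -mulmxA Mw mulmx0 mxE mulr0.
  have [_ e5] := Skernel e2 e3 v0 S0.
  exists (lam^-1 * - q 0 0); rewrite -scalerA -e5 scalerA mulVf ?scale1r //.
  by apply/eqP => h; move: lam_pos; rewrite h; cbn; lra.
by case=> c ->; rewrite -scalemxAr Mv0 // scaler0.
Qed.


Lemma C_ext (x y : CC) : Re x = Re y -> Im x = Im y -> x = y.
Proof. by case: x => ? ?; case: y => ? ? /= -> ->. Qed.

Lemma det_zero_row m (A : 'M[CC]_m) r : (forall j, A r j = 0) -> \det A = 0.
Proof. by move=> h; rewrite (expand_det_row _ r) big1 // => j _; rewrite h mul0r. Qed.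
Lemma det_zero_col m (A : 'M[CC]_m) c : (forall i, A i c = 0) -> \det A = 0.
Proof. by move=> h; rewrite (expand_det_col _ c) big1 // => j _; rewrite h mul0r. Qed.

Lemma delta_liftr n m (i : 'I_n) (j : 'I_m.+1) :
  (delta_mx (ord0 : 'I_n.+1) (ord0 : 'I_m.+1) : 'M[R]__) (lift ord0 i) j = 0.
Proof. by rewrite mxE (negPf (lift0_neq i)). Qed.
Lemma delta_liftc n m (i : 'I_n.+1) (j : 'I_m) :
  (delta_mx (ord0 : 'I_n.+1) (ord0 : 'I_m.+1) : 'M[R]__) i (lift ord0 j) = 0.
Proof. by rewrite mxE (negPf (lift0_neq j)) andbF. Qed.

Lemma delta00 n : (delta_mx ord0 ord0 : 'M[R]_(n.+1)) ord0 ord0 = 1.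
Proof. by rewrite mxE !eqxx. Qed.

Lemma Mcase2 n (H : 'M[R]_(n.+1)) theta : H^T = H -> \col_j H j ord0 = 0 ->
  linM theta H = linM theta H ord0 ord0 *: delta_mx ord0 ord0.
Proof.
move=> Hs Hv.
have Hc : forall i, H i ord0 = 0.
  by move=> i; have := congr1 (fun A : 'cV[R]_(n.+1) => A i 0) Hv; rewrite !mxE.
have Hr : forall j, H ord0 j = 0.
  by move=> j; rewrite -[H]Hs mxE; exact: Hc.
set N := plus_iH (In_mx n) H.
have z0 : forall r : R, r = 0 -> iC * RtoC r = 0.
  by move=> r ->; apply: C_ext; cbn; ring.
have Nr : forall j, N ord0 j = 0.
  by move=> j; rewrite /N /plus_iH !mxE eqxx andbF Hr add0r z0.
have Nc : forall i, N i ord0 = 0.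
  by move=> i; rewrite /N /plus_iH !mxE andbN Hc add0r z0.
apply/matrixP=> i j.
case: (unliftP ord0 i) => [i'|] ->.
  rewrite [in RHS]mxE delta_liftr mulr0 /linM /cofmx !mxE -/N.
  case: (unliftP (lift ord0 i') ord0) => [r er|]; last by move/(congr1 (@nat_of_ord _)); rewrite lift0.
  rewrite /cofactor (@det_zero_row _ _ r) ?mulr0 //.
  by move=> c; rewrite mxE mxE -er Nr.
case: (unliftP ord0 j) => [j'|] ->; last by rewrite [in RHS]mxE delta00 mulr1.
rewrite [in RHS]mxE delta_liftc mulr0 /linM /cofmx !mxE -/N.
case: (unliftP (lift ord0 j') ord0) => [c ec|]; last by move/(congr1 (@nat_of_ord _)); rewrite lift0.
rewrite /cofactor (@det_zero_col _ _ c) ?mulr0 //.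
by move=> r; rewrite mxE mxE -ec Nc.
Qed.


Lemma case2 n (H : 'M[R]_(n.+1)) theta : H^T = H -> \col_j H j ord0 = 0 ->
  Rlt R0 (linM theta H ord0 ord0) ->
  psd (linM theta H) /\ mup 0 (char_poly (linM theta H)) = n.
Proof.
move=> Hs Hv.
have ME := Mcase2 theta Hs Hv.
move: ME; set c := linM theta H ord0 ord0; move: (linM theta H) => M -> hc.
split.
  move=> w.
  have -> : (w^T *m (c *: delta_mx ord0 ord0) *m w) 0 0 = c * (w 0 0 * w 0 0).
    rewrite -scalemxAr -scalemxAl mxE; congr (_ * _).
    rewrite -(mul_delta_mx (0 : 'I_1)) mulmxA -colE -mulmxA -rowE.
    by rewrite mxE big_ord1 !mxE.
  move: (w 0 0) => x; cbn; nra.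
rewrite char_poly_trig; last first.
  apply/is_trig_mxP => i j lt.
  have hj : j != ord0 by rewrite -val_eqE /= -lt0n (leq_ltn_trans _ lt).
  by rewrite !mxE (negPf hj) andbF mulr0.
rewrite big_ord_recl.
rewrite (eq_bigr (fun _ => 'X - 0%:P)); last first.
  by move=> i _; rewrite mxE delta_liftr mulr0.
rewrite prodr_const card_ord mupMr ?mup_XsubCX ?eqxx //.
rewrite root_XsubC; apply/eqP => h.
rewrite mxE delta00 mulr1 in h; move: hc; rewrite -h; cbn; lra.
Qed.


Lemma char_poly_conj m (A Si S : 'M[R]_m) : Si *m S = 1%:M ->
  char_poly (Si *m A *m S) = char_poly A.
Proof.
move=> hS; rewrite /char_poly.
have E : map_mx polyC Si *m map_mx polyC S = 1%:M.
  by rewrite -map_mxM hS map_mx1.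
have -> : char_poly_mx (Si *m A *m S) =
    map_mx polyC Si *m char_poly_mx A *m map_mx polyC S.
  rewrite /char_poly_mx mulmxBr mulmxBl !map_mxM; congr (_ - _).
  by rewrite scalar_mxC -mulmxA E mulmx1.
rewrite !det_mulmx mulrC mulrA -det_mulmx -map_mxM.
suff -> : S *m Si = 1%:M by rewrite map_mx1 det1 mul1r.
by apply: mulmx1C.
Qed.

Lemma char_poly_col m (T : 'M[R]_m.+1) (k : 'I_m.+1) (a : R) :
  T *m delta_mx k (0 : 'I_1) = a *: delta_mx k (0 : 'I_1) ->
  char_poly T = ('X - a%:P) * char_poly (row' k (col' k T)).
Proof.
move=> hT.
have Tik : forall i, T i k = a * (i == k)%:R.
  move=> i; have := congr1 (fun A : 'cV[R]_(m.+1) => A i 0) hT.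
  by rewrite -colE !mxE eqxx andbT.
rewrite /char_poly (expand_det_col _ k) (bigD1 k) //= big1 ?addr0.
  rewrite /cofactor -signr_odd addnn odd_double expr0 mul1r row'_col'_char_poly_mx.
  by rewrite !mxE eqxx Tik eqxx mulr1 mulr1n.
move=> i ne; rewrite !mxE Tik (negPf ne) mulr0 mulr0n subr0 mul0r //.
Qed.

Lemma mup_one m (M : 'M[R]_(m.+1)) (v : 'cV[R]_(m.+1)) (k : 'I_m.+1) :
  v k 0 != 0 -> M *m v = 0 -> \det (M + v *m v^T) != 0 -> (v^T *m v) 0 0 != 0 ->
  mup 0 (char_poly M) = 1%N.
Proof.
move=> vk Mv dM mu0.
set e : 'cV[R]_(m.+1) := delta_mx k 0.
set u := v - e.
set U := u *m e^T.
set c := (v k 0)^-1.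
set S := 1%:M + U.
set Si := 1%:M - c *: U.
have eu : e^T *m u = (v k 0 - 1)%:M.
  rewrite /e trmx_delta -rowE [LHS]mx11_scalar; congr (_%:M).
  by rewrite mxE /u /e !mxE !eqxx.
have ee : e^T *m e = 1%:M.
  by rewrite /e trmx_delta mul_delta_mx; apply/matrixP=> i j; rewrite !ord1 !mxE.
have UU : U *m U = (v k 0 - 1) *: U.
  by rewrite /U mulmxA -(mulmxA u) eu mul_mx_scalar -scalemxAl.
have hS : Si *m S = 1%:M.
  rewrite /Si /S mulmxDr mulmx1 mulmxBl mul1mx -scalemxAl UU scalerA.
  have -> : U - (c * (v k 0 - 1)) *: U = c *: U.
    by rewrite mulrBr mulr1 /c mulVf // scalerBl scale1r opprB addrC subrK.
  by rewrite subrK.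
have Se : S *m e = v.
  by rewrite /S mulmxDl mul1mx /U -mulmxA ee mulmx1 /u addrC subrK.
have Siv : Si *m v = e by rewrite -Se mulmxA hS mul1mx.
clearbody Si S.
set mu := (v^T *m v) 0 0.
set T := Si *m M *m S.
set T' := Si *m (M + v *m v^T) *m S.
have Te : T *m e = 0 *: e by rewrite scale0r /T -mulmxA Se -mulmxA Mv mulmx0.
have M'v : (M + v *m v^T) *m v = mu *: v.
  by rewrite mulmxDl Mv add0r -mulmxA [v^T *m v]mx11_scalar mul_mx_scalar.
have T'e : T' *m e = mu *: e.
  by rewrite /T' -mulmxA Se -mulmxA M'v -scalemxAr Siv.
have BB : row' k (col' k T') = row' k (col' k T).
  have Z : forall i j, (e *m v^T *m S) (lift k i) j = 0.
    move=> i j; have nk : (lift k i == k) = false.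
      by apply/negbTE; rewrite eq_sym neq_lift.
    by rewrite -mulmxA mxE big_ord1 /e mxE nk mul0r.
  rewrite /T' mulmxDr mulmxDl mulmxA Siv; apply/matrixP=> i j.
  do 3 rewrite [LHS]mxE; do 2 rewrite [RHS]mxE.
  by rewrite Z addr0.
have cM : char_poly M = 'X * char_poly (row' k (col' k T)).
  by rewrite -(char_poly_conj M hS) -/T (char_poly_col Te) polyC0 subr0.
have cM' : char_poly (M + v *m v^T) = ('X - mu%:P) * char_poly (row' k (col' k T)).
  by rewrite -(char_poly_conj _ hS) -/T' (char_poly_col T'e) BB.
rewrite cM mupMl.
  by rewrite -['X]expr1 -['X]subr0 -polyC0 mup_XsubCX eqxx.
apply/negP => /rootP h.
have := congr1 (fun p => p.[0]) cM'; rewrite /= hornerM h mulr0 horner_coef0.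
rewrite char_poly_det => /eqP; rewrite mulf_eq0 signr_eq0 /=.
by rewrite (negPf dM).
Qed.


Lemma sq_neg0 (x : R) : Rle R0 (- (x * x)) -> x = 0.
Proof. cbn => h; nra. Qed.

Lemma case1_mup n (H : 'M[R]_(n.+1)) theta : H^T = H ->
  Im (expi (Ropp theta) * \det (plus_iH (In_mx n) H)) = R0 ->
  Rlt R0 (Re (expi (Ropp theta) * \det (plus_iH 1%:M (xblock H)))) ->
  \col_j H j ord0 != 0 ->
  mup 0 (char_poly (linM theta H)) = 1%N.
Proof.
move=> Hs hIm hRe v0.
have [psdM ker] := case1 Hs hIm hRe v0.
have Ms := M_sym theta Hs.
have Mv := Mv0 Hs hIm.
move: psdM ker Ms Mv v0; set M := linM theta H; set v := \col_j H j ord0.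
move=> psdM ker Ms Mv v0.
have [k vk] : exists k, v k 0 != 0.
  case: (pickP (fun k => v k 0 != 0)) => [k hk|h]; first by exists k.
  move: v0; suff -> : v = 0 by rewrite eqxx.
  by apply/matrixP=> i j; rewrite ord1 [RHS]mxE; move: (h i) => /= /negbFE /eqP.
have mu0 : (v^T *m v) 0 0 != 0.
  apply/eqP => h; move: v0; suff -> : v = 0 by rewrite eqxx.
  have h' : \sum_i (v i 0) ^+ 2 = 0.
    transitivity ((v^T *m v) 0 0); last exact: h.
    rewrite [RHS]mxE; apply: eq_bigr => i _; by rewrite [v^T 0 i]mxE expr2.
  by apply/matrixP=> i j; rewrite ord1 [RHS]mxE; exact: (sumsq_eq0 h' i).
apply: (mup_one vk Mv _ mu0).
apply/negP => /det0P [u u0 uM].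
set w := u^T.
set a := (v^T *m w) 0 0.
have M'w : (M + v *m v^T) *m w = 0.
  have := congr1 trmx uM; rewrite trmx_mul linearD /= trmx_mul trmxK Ms.
  by rewrite trmx0.
have Mw : M *m w = - (a *: v).
  apply/eqP; rewrite -addr_eq0 -M'w mulmxDl -mulmxA [v^T *m w]mx11_scalar.
  by rewrite mul_mx_scalar.
have wv : (w^T *m v) 0 0 = a by rewrite /a -[w^T *m v]trmxK trmx_mul trmxK mxE.
have Qw := psdM w.
rewrite -mulmxA Mw mulmxN -scalemxAr mxE mxE wv in Qw.
have a0 : a = 0 by apply: sq_neg0.
move: Mw; rewrite a0 scale0r oppr0 => /ker [c wc].
have : a = c * (v^T *m v) 0 0 by rewrite /a wc -scalemxAr mxE.
rewrite a0 => /esym/eqP; rewrite mulf_eq0 (negPf mu0) orbF => /eqP c0.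
move: u0; rewrite -[u]trmxK -/w wc c0 scale0r trmx0 eqxx.
by [].
Qed.

Theorem theorem4p1 (n : nat) (D : pt n -> Prop) (theta : R)
    (k : pt n.+1 -> R) (Dk : 'I_n.+1 -> pt n.+1 -> R)
    (D2k : 'I_n.+1 -> 'I_n.+1 -> pt n.+1 -> R) :
  is_domain D ->
  Rlt (Ropp PI) theta -> Rle theta PI ->
  C2_on (Omega D) k Dk D2k ->
  (forall z, Omega D z ->
     Im (expi (Ropp theta) * \det (plus_iH (In_mx n) (hess D2k z))) = R0 /\
     Rlt R0 (Re (expi (Ropp theta) * \det (plus_iH 1%:M (xblock (hess D2k z)))))) ->
  forall z, Omega D z ->
    let M := linM theta (hess D2k z) in
    let v := grad_kdot D2k z in
    (v != 0 ->
       psd M /\ mup 0 (char_poly M) = 1%N /\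
       (forall w : 'cV[R]_(n.+1), M *m w = 0 <-> exists c : R, w = c *: v)) /\
    (v = 0 ->
       psd M /\ mup 0 (char_poly M) = n).
Proof.
move=> Dom _ _ HC Hyp z Oz M v.
have Hs : (hess D2k z)^T = hess D2k z.
  by apply/matrixP=> i j; rewrite !mxE; exact: (hess_sym Dom HC Oz j i).
have [hIm hRe] := Hyp z Oz.
have vE : v = \col_j (hess D2k z) j ord0 by apply/matrixP => i j; rewrite !mxE.
split.
  move=> v0; rewrite vE in v0 *.
  have [ps ker] := case1 Hs hIm hRe v0.
  split; first exact: ps.
  split; last exact: ker.
  exact: case1_mup.
move=> v0; rewrite vE in v0; apply: case2 => //.
by rewrite M00.
Qed.
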